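(* Let $G=(V,E)$ be an atomic bispanning graph and $v\in V$ a vertex of degree $3$ with adjacent vertices $x,y,z$, joined to $v$ by the edges $e_x,e_y,e_z$ respectively. For each $(a,b)\in\{(x,y),(x,z),(y,z)\}$, the graph $G_{a,b}$ with vertex set $V-v$ and edge set $E-e_x-e_y-e_z+e_{a,b}$, where $e_{a,b}$ is a new edge with ends $a$ and $b$, is bispanning.
   Context: Graphs are finite, undirected, may have parallel edges, no loops; $X\pm a$ denotes adding/removing a single element. A spanning tree of $G$ is $T\subseteq E$ with $(V,T)$ connected and acyclic; $G$ is bispanning if $E$ is the union of two disjoint spanning trees. A bispanning graph is atomic if its only bispanning subgraphs are itself and single vertices. Equivalently $G_{a,b}$ is obtained from $G$ by contracting $e_a$ (merging $v$ into $a$) and deleting the former edge $e_c$, $c$ being the third neighbour; the paper calls $G_{x,y},G_{x,z},G_{y,z}$ the reduction graphs of $G$ at $v$. *)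

(* Defs.v *)
(* Finite loopless multigraphs: vertices a finType V,
   edges a finType E, each edge e has ends src e and dst e (undirected). *)
From mathcomp Require Import all_boot.
Set Implicit Arguments. Unset Strict Implicit. Unset Printing Implicit Defensive.

Section Graphs.
Variables (V E : finType) (src dst : E -> V).

Definition joins (e : E) (a b : V) : bool :=
  ((src e == a) && (dst e == b)) || ((src e == b) && (dst e == a)).

Definition adj (F : {set E}) : rel V :=
  fun u w => [exists e in F, joins e u w].

Definition gconnected (W : {set V}) (F : {set E}) : Prop :=
  forall x y, x \in W -> y \in W -> connect (adj F) x y.

(* F contains a cycle: distinct vertices v_0..v_{k-1}, distinct edges
   e_1..e_k (k >= 1) with e_i joining v_{i-1} and v_i (indices mod k) *)
Definition has_cycle (F : {set E}) : Prop :=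
  exists (vs : seq V) (es : seq E),
    [/\ 0 < size es, uniq vs, uniq es, {subset es <= F} &
        all2 (fun e (p : V * V) => joins e p.1 p.2) es (zip vs (rot 1 vs))].

Definition spanning_tree (W : {set V}) (F T : {set E}) : Prop :=
  [/\ T \subset F, gconnected W T & ~ has_cycle T].

Definition bispanning (W : {set V}) (F : {set E}) : Prop :=
  exists T1 T2 : {set E},
    [/\ spanning_tree W F T1, spanning_tree W F T2,
        [disjoint T1 & T2] & T1 :|: T2 = F].

Definition is_subgraph (W : {set V}) (F : {set E}) (W' : {set V}) (F' : {set E}) : Prop :=
  [/\ W' != set0, W' \subset W, F' \subset F &
      forall e, e \in F' -> (src e \in W') && (dst e \in W')].

Definition atomic : Prop :=
  bispanning [set: V] [set: E] /\
  forall W' F', is_subgraph [set: V] [set: E] W' F' -> bispanning W' F' ->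
    (W' = [set: V] /\ F' = [set: E]) \/ (exists u, W' = [set u]).

End Graphs.

(* reduction graph G_{a,b}: edge type option E, None is the new edge e_{a,b} *)
Definition red_ends (V E : finType) (ends : E -> V) (c : V) : option E -> V :=
  fun o => if o is Some e then ends e else c.

Definition red_edges (E : finType) (ex ey ez : E) : {set option E} :=
  [set o | if o is Some e then e \notin [set ex; ey; ez] else true].

Definition red_vertices (V : finType) (v : V) : {set V} := [set: V] :\ v.

(* Main.v *)
Require Import Defs.
From mathcomp Require Import all_boot.
Set Implicit Arguments. Unset Strict Implicit. Unset Printing Implicit Defensive.


Lemma connect_rect (T : finType) (r : rel T) (R : T -> T -> Prop) :
  (forall u, R u u) -> (forall u w t, r u w -> R w t -> R u t) ->
  forall u w, connect r u w -> R u w.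
Proof.
move=> Rr Rs u w /connectP [p pth ->] {w}.
elim: p u pth => [|c p IH] u /= => [_|/andP[ruc pc]]; first exact: Rr.
exact: Rs ruc (IH _ pc).
Qed.

Lemma all2_mem (A B : eqType) (r : A -> B -> bool) es qs e :
  all2 r es qs -> e \in es -> exists2 q, q \in qs & r e q.
Proof.
elim: es qs => [|e0 es IH] [|q qs] //= /andP [r0 al].
rewrite inE => /orP [/eqP ->|ein]; first by exists q; rewrite ?inE ?eqxx.
have [q' q'in rq'] := IH _ al ein; exists q' => //; by rewrite inE q'in orbT.
Qed.

Lemma mem_zip1 (A B : eqType) (xs : seq A) (ys : seq B) q :
  q \in zip xs ys -> (q.1 \in xs) && (q.2 \in ys).
Proof.
elim: xs ys => [|a xs IH] [|b ys] //=; rewrite inE => /orP [/eqP ->|qin] /=.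
  by rewrite !inE !eqxx.
by have /andP [h1 h2] := IH _ qin; rewrite !inE h1 h2 !orbT.
Qed.

Lemma all2_rcons (A B : Type) (r : A -> B -> bool) s t x y :
  size s = size t -> all2 r (rcons s x) (rcons t y) = all2 r s t && r x y.
Proof.
elim: s t => [|a s IH] [|b t] //=; first by rewrite andbT.
move=> [sz]; by rewrite IH // andbA.
Qed.

Section Gen.
Variables (V E : finType) (s d : E -> V).

Implicit Types (F T G : {set E}).
Local Notation con F := (connect (adj s d F)).

Lemma joinsC e a b : joins s d e a b = joins s d e b a.
Proof. by rewrite /joins orbC. Qed.

Lemma adjC F : symmetric (adj s d F).
Proof.
move=> a b; apply/existsP/existsP => -[e /andP [eF J]]; exists e;
  by rewrite eF joinsC.
Qed.

Lemma conC F a b : con F a b = con F b a.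
Proof. exact: (sym_connect_sym (adjC F)). Qed.

Lemma joins_ends e : joins s d e (s e) (d e).
Proof. by rewrite /joins !eqxx. Qed.

Lemma adj_edge F e a b : e \in F -> joins s d e a b -> adj s d F a b.
Proof. move=> eF J; apply/existsP; exists e; by rewrite eF. Qed.

Lemma con_edge F e a b : e \in F -> joins s d e a b -> con F a b.
Proof. move=> eF J; apply: connect1; exact: adj_edge eF J. Qed.

Lemma con_sub F F' a b : F \subset F' -> con F a b -> con F' a b.
Proof.
move=> sFF'; apply: connect_sub => u w /existsP [e /andP [eF J]].
exact: con_edge (subsetP sFF' _ eF) J.
Qed.

Lemma joins_cases e a b : joins s d e a b ->
  (s e = a /\ d e = b) \/ (s e = b /\ d e = a).
Proof. by case/orP => /andP [/eqP h1 /eqP h2]; [left|right]. Qed.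

Lemma joins_in e a b a' b' : joins s d e a b -> joins s d e a' b' ->
  (a == a') || (a == b').
Proof.
case/joins_cases => -[? ?] /joins_cases [] [? ?]; subst; by rewrite eqxx ?orbT.
Qed.

Lemma con_split F f u w : con F u w ->
  [\/ con (F :\ f) u w,
      con (F :\ f) u (s f) /\ con (F :\ f) (d f) w |
      con (F :\ f) u (d f) /\ con (F :\ f) (s f) w].
Proof.
pose G := F :\ f.
apply: (connect_rect (R := fun u w => [\/ con G u w,
      con G u (s f) /\ con G (d f) w | con G u (d f) /\ con G (s f) w])).
- by move=> a; constructor 1.
- move=> a c b /existsP [e /andP [eF J]] IH.
  have [ef|nef] := eqVneq e f.
  + subst e; case/joins_cases: J => -[sf df]; rewrite -sf -df in IH *.
    * case: IH => [h|[h1 h2]|[h1 h2]].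
      - by constructor 2.
      - by constructor 2.
      - by constructor 1.
    * case: IH => [h|[h1 h2]|[h1 h2]].
      - by constructor 3.
      - by constructor 1.
      - by constructor 3.
  + have ac : con G a c by apply: (con_edge (e := e)) J; rewrite !inE nef.
    case: IH => [h|[h1 h2]|[h1 h2]].
    * constructor 1; exact: connect_trans ac h.
    * constructor 2; split => //; exact: connect_trans ac h1.
    * constructor 3; split => //; exact: connect_trans ac h1.
Qed.

Lemma con_isolated F v u :
  (forall e, e \in F -> (s e != v) && (d e != v)) -> con F v u -> u = v.
Proof.
move=> iso.
suff H : forall a b, con F a b -> a = v -> b = v by move=> c; exact: H c erefl.
apply: connect_rect => // a c b /existsP [e /andP [eF J]] _ av; subst a.
have /andP [h1 h2] := iso e eF.
by case/joins_cases: J => -[k1 k2]; [move: h1 | move: h2]; rewrite ?k1 ?k2 eqxx.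
Qed.

Lemma con_pres F (P : pred V) :
  (forall e, e \in F -> P (s e) = P (d e)) -> forall u w, con F u w -> P u = P w.
Proof.
move=> pres; apply: connect_rect => // a c b /existsP [e /andP [eF J]] <-.
by case/joins_cases: J => -[<- <-]; rewrite pres.
Qed.

Definition forest (T : {set E}) :=
  forall e, e \in T -> ~~ con (T :\ e) (s e) (d e).

Lemma chain_con F es a xs b : {subset es <= F} ->
  all2 (fun e (p : V * V) => joins s d e p.1 p.2) es (zip (a :: xs) (rcons xs b)) ->
  con F a b.
Proof.
elim: xs a es => [|c xs IH] a [|e es] //= sub /andP [J rest].
  by apply: (con_edge (e := e)) J; apply: sub; rewrite inE eqxx.
apply: connect_trans (IH c es _ rest).
  by apply: (con_edge (e := e)) J; apply: sub; rewrite inE eqxx.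
by move=> y yin; apply: sub; rewrite inE yin orbT.
Qed.

Lemma forest_nocyc T : forest T -> ~ has_cycle s d T.
Proof.
move=> fT [vs [es [n0 uvs ues sub al]]].
case: es n0 ues sub al => // e es _ /= /andP [enes ues] sub.
have eT : e \in T by apply: sub; rewrite inE eqxx.
have sub' : {subset es <= T :\ e}.
  move=> y yin; rewrite !inE sub ?inE ?yin ?orbT // andbT.
  by apply/eqP => ye; rewrite -ye yin in enes.
case: vs uvs => [|a xs] _ //; rewrite rot1_cons.
case: xs => [|c xs] /=.
  case/andP => J _; have := fT e eT.
  by case/joins_cases: J => -[-> ->]; rewrite connect0.
case/andP => J rest; have C := chain_con sub' rest.
have := fT e eT.
by case/joins_cases: J => -[-> ->]; rewrite ?C // conC C.
Qed.

Lemma path_edges F u p : path (adj s d F) u p -> uniq (u :: p) ->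
  exists es, [/\ size es = size p, {subset es <= F}, uniq es &
     all2 (fun e (q : V * V) => joins s d e q.1 q.2) es (zip (belast u p) p)].
Proof.
elim: p u => [|c p IH] u /=.
  by move=> _ _; exists [::]; split.
case/andP => /existsP [e /andP [eF J]] pth /andP [unin ucp].
have [es [sz sub ues al]] := IH c pth ucp.
exists (e :: es); split => //=.
- by rewrite sz.
- by move=> y; rewrite inE => /orP [/eqP -> //| /sub].
- rewrite ues andbT; apply/negP => ees.
  have [q qin Jq] := all2_mem al ees.
  have /andP [q1 q2] := mem_zip1 qin.
  have /mem_belast q1' := q1.
  have q2' : q.2 \in c :: p by rewrite inE q2 orbT.
  by case/orP: (joins_in J Jq) => /eqP equ; move: unin; rewrite equ ?q1' ?q2'.
- by rewrite J al.
Qed.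

Lemma nocyc_forest T : ~ has_cycle s d T -> forest T.
Proof.
move=> nc e eT; apply/negP => C; apply: nc.
have [eq|neq] := eqVneq (s e) (d e).
  exists [:: s e], [:: e]; split => //=.
    by move=> y; rewrite inE => /eqP ->.
  by rewrite /joins eq !eqxx.
have [p [pth up lst]] : exists p, [/\ path (adj s d (T :\ e)) (s e) p,
    uniq (s e :: p) & last (s e) p = d e].
  move/connectP: C => [p0 pth0 lst0]; rewrite lst0.
  by case: (shortenP pth0) => p' ? ? _; exists p'.
have [es [sz sub ues al]] := path_edges pth up.
exists (s e :: p), (rcons es e); split => //.
- by rewrite size_rcons.
- rewrite rcons_uniq ues andbT; apply/negP => /sub; by rewrite !inE eqxx.
- move=> y; rewrite mem_rcons inE => /orP [/eqP -> //|/sub]; by rewrite inE => /andP [].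
- rewrite rot1_cons lastI zip_rcons ?size_belast // all2_rcons;
    last by rewrite size_zip size_belast sz minnn.
  by rewrite al lst joinsC joins_ends.
Qed.

Lemma forest_sub T T' : T' \subset T -> forest T -> forest T'.
Proof.
move=> sub fT; apply: nocyc_forest => -[vs [es [n0 uvs ues sub' al]]].
apply: (forest_nocyc fT); exists vs, es; split => // y /sub'; exact: (subsetP sub).
Qed.

End Gen.


Section Gen2.
Variables (V E : finType) (s d : E -> V).
Implicit Types (F T G : {set E}).
Local Notation con F := (connect (adj s d F)).
Local Notation forest := (forest s d).

Lemma setD1U F g f : f \notin F :\ g -> (F :\ g :|: [set f]) :\ f = F :\ g.
Proof.
move=> nf; apply/setP => y; rewrite !inE.
case: (eqVneq y f) => [->|yf] /=; last by rewrite orbF.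
by move: nf; rewrite !inE => /negbTE ->.
Qed.

Lemma exchange T g f : gconnected s d [set: V] T -> forest T -> g \in T ->
  ~~ con (T :\ g) (s f) (d f) ->
  gconnected s d [set: V] ((T :\ g) :|: [set f]) /\ forest ((T :\ g) :|: [set f]).
Proof.
move=> cT fT gT nc.
set G := T :\ g; set T' := G :|: [set f].
have GT' : G \subset T' by apply: subsetUl.
have fT' : f \in T' by rewrite !inE eqxx orbT.
have cut u : con G u (s g) \/ con G u (d g).
  have := cT u (s g) (in_setT _) (in_setT _).
  by case/(con_split g) => [h|[h _]|[h _]]; [left|left|right].
have fG : f \notin G.
  apply: contra nc => fG; exact: (con_edge fG (joins_ends s d f)).
have key : con T' (s g) (d g).
  case: (cut (s f)) => h1; case: (cut (d f)) => h2.
  - by move: nc; rewrite (connect_trans h1 _) // conC.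
  - rewrite conC in h1.
    apply: connect_trans (con_sub GT' h1) _; apply: connect_trans (con_sub GT' h2).
    exact: con_edge fT' (joins_ends s d f).
  - rewrite conC in h2.
    apply: connect_trans (con_sub GT' h2) _; apply: connect_trans (con_sub GT' h1).
    by rewrite conC; exact: con_edge fT' (joins_ends s d f).
  - by move: nc; rewrite (connect_trans h1 _) // conC.
have toS u : con T' u (s g).
  case: (cut u) => h; first exact: con_sub GT' h.
  by apply: connect_trans (con_sub GT' h) _; rewrite conC.
split.
  by move=> a b _ _; apply: connect_trans (toS a) _; rewrite conC.
move=> h hT'; have [->|nhf] := eqVneq h f.
  by rewrite setD1U.
have hG : h \in G by move: hT'; rewrite !inE (negbTE nhf) orbF.
have hT : h \in T by move: hG; rewrite !inE => /andP [].
apply/negP => C.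
have sub1 : T' :\ h :\ f \subset T :\ h.
  by apply/subsetP => y; rewrite !inE; case: (y == f); case: (y == h); case: (y == g); case: (y \in T).
have sub2 : T' :\ h :\ f \subset G.
  by apply/subsetP => y; rewrite !inE; case: (y == f); case: (y == h); case: (y == g); case: (y \in T).
case: (con_split f C) => [k|[k1 k2]|[k1 k2]].
- by move: (fT h hT); rewrite (con_sub sub1 k).
- have : con G (s f) (d f).
    rewrite conC in k1; apply: connect_trans (con_sub sub2 k1) _.
    apply: connect_trans (con_edge hG (joins_ends s d h)) _.
    by rewrite conC; exact: con_sub sub2 k2.
  by move=> H; rewrite H in nc.
- have : con G (s f) (d f).
    apply: connect_trans (con_sub sub2 k2) _.
    apply: connect_trans _ (con_sub sub2 k1).
    by rewrite conC; exact: con_edge hG (joins_ends s d h).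
  by move=> H; rewrite H in nc.
Qed.

Lemma minimal_sub F a b : con F a b ->
  exists2 F' : {set E}, F' \subset F & con F' a b /\ (forall g, g \in F' -> ~~ con (F' :\ g) a b).
Proof.
move: {2}#|F| (leqnn #|F|) => n; elim: n F => [|n IH] F Fn C;
  case: (boolP [forall (g | g \in F), ~~ con (F :\ g) a b]) => H.
- by exists F => //; split => // g gF; move/forall_inP: H; apply.
- move/forall_inPn: H => [g gF _].
  by move: Fn; rewrite leqn0 cards_eq0 => /eqP F0; rewrite F0 inE in gF.
- by exists F => //; split => // g gF; move/forall_inP: H; apply.
- move/forall_inPn: H => [g gF]; rewrite negbK => Cg.
  have Fg : #|F :\ g| <= n.
    by move: Fn; rewrite (cardsD1 g F) gF add1n ltnS.
  have [F' sub [C' crit]] := IH _ Fg Cg.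
  exists F' => //; apply: subset_trans sub _; exact: subsetDl.
Qed.

Lemma crossing F a b (P : pred V) : forest F -> con F a b -> P a -> ~~ P b ->
  exists2 g, g \in F & (P (s g) != P (d g)) && ~~ con (F :\ g) a b.
Proof.
move=> fF C Pa Pb.
have [F' sub [C' crit]] := minimal_sub C.
have [g gF' cr] : exists2 g, g \in F' & P (s g) != P (d g).
  apply/exists_inP; apply: contraT => /exists_inPn H.
  have Eq := con_pres (F := F') (P := P) _ C'.
  by move: Pb; rewrite -Eq ?Pa // => e /H; rewrite negbK => /eqP.
exists g; first exact: subsetP sub g gF'.
rewrite cr /=; apply/negP => C2.
have sub' : F' :\ g \subset F :\ g by apply: setSD.
have gF : g \in F by exact: subsetP sub g gF'.
case: (con_split g C') => [k|[k1 k2]|[k1 k2]].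
- by move: (crit g gF'); rewrite k.
- move: (fF g gF); rewrite conC in k1.
  rewrite (connect_trans (con_sub sub' k1) _) //.
  by apply: connect_trans C2 _; rewrite conC; exact: con_sub sub' k2.
- have : con (F :\ g) (s g) (d g).
    apply: connect_trans (con_sub sub' k2) _.
    apply: connect_trans (_ : con (F :\ g) b a) _; first by rewrite conC.
    exact: con_sub sub' k1.
  by move=> H; move: (fF g gF); rewrite H.
Qed.

Lemma con_restrict F a u : con F a u ->
  con (F :&: [set e | con F a (s e) && con F a (d e)]) a u.
Proof.
set F' := F :&: _.
suff H : forall u' w, con F u' w -> con F a u' -> con F' u' w.
  by move=> C; apply: H C (connect0 _ _).
apply: connect_rect => [u0 _|u0 c w /existsP [e /andP [eF J]] IH au].
  exact: connect0.
have ac : con F a c by apply: connect_trans au (con_edge eF J).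
have eF' : e \in F'.
  by rewrite !inE eF; case/joins_cases: (J) => -[-> ->]; rewrite au ac.
exact: connect_trans (con_edge eF' J) (IH ac).
Qed.

Lemma con_inside F (S : {set V}) u w :
  (forall e, e \in F -> (s e \in S) && (d e \in S)) -> con F u w -> u \in S -> w \in S.
Proof.
move=> ins; move: u w; apply: connect_rect => // u0 c w /existsP [e /andP [eF J]] IH uS.
apply: IH; have /andP [h1 h2] := ins e eF.
by case/joins_cases: J => -[k1 k2]; rewrite -?k1 -?k2.
Qed.

End Gen2.

Lemma con_map (V V' : finType) (r : rel V) (r' : rel V') (phi : V -> V') :
  (forall p q, r p q -> connect r' (phi p) (phi q)) ->
  forall u w, connect r u w -> connect r' (phi u) (phi w).
Proof.
move=> H; apply: connect_rect => [u|u w t ruw IH]; first exact: connect0.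
exact: connect_trans (H _ _ ruw) IH.
Qed.

Section Gen3.
Variables (V E : finType) (s d : E -> V).
Implicit Types (F T G : {set E}).
Local Notation con F := (connect (adj s d F)).

Lemma con_ends F e a b : joins s d e a b -> con F (s e) (d e) = con F a b.
Proof. by case/joins_cases => -[-> ->]; rewrite // conC. Qed.

Lemma joins_P e a b (P : V -> Prop) : joins s d e a b -> P a -> P b -> P (s e) /\ P (d e).
Proof. by case/joins_cases => -[-> ->]. Qed.

End Gen3.


Section Pair.
Variables (V E : finType) (s d : E -> V).
Implicit Types (F T G : {set E}).
Local Notation con F := (connect (adj s d F)).
Local Notation forest := (forest s d).

Inductive decomp T1 T2 : Prop :=
  Decomp of gconnected s d [set: V] T1 & forest T1 & gconnected s d [set: V] T2 &
      forest T2 & [disjoint T1 & T2] & T1 :|: T2 = [set: E].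

Lemma decompC T1 T2 : decomp T1 T2 -> decomp T2 T1.
Proof. by case=> c1 f1 c2 f2 dis un; split => //; [rewrite disjoint_sym | rewrite setUC]. Qed.

Lemma decomp_dis T1 T2 e : decomp T1 T2 -> e \in T1 -> e \in T2 -> False.
Proof. by case=> _ _ _ _ dis _ /(disjointFr dis) ->. Qed.

Lemma decomp_un T1 T2 e : decomp T1 T2 -> (e \in T1) || (e \in T2).
Proof. by case=> _ _ _ _ _ /setP /(_ e); rewrite !inE. Qed.

Lemma swap_decomp T1 T2 f g : decomp T1 T2 -> f \in T1 -> g \in T2 ->
  ~~ con (T1 :\ f) (s g) (d g) -> ~~ con (T2 :\ g) (s f) (d f) ->
  decomp (T1 :\ f :|: [set g]) (T2 :\ g :|: [set f]).
Proof.
move=> D fT1 gT2 n1 n2; have D' := D; case: D' => c1 f1 c2 f2 _ _.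
have [c1' f1'] := exchange c1 f1 fT1 n1.
have [c2' f2'] := exchange c2 f2 gT2 n2.
have fT2 : f \notin T2 by apply/negP => /(decomp_dis D fT1).
have gT1 : g \notin T1 by apply/negP => /(decomp_dis D)/(_ gT2).
have fg : f != g by apply/eqP => fg; rewrite fg gT2 in fT2.
split => //.
- rewrite -setI_eq0; apply/eqP/setP => e; rewrite !inE.
  case: (eqVneq e f) => [->|ef] /=; first by rewrite (negbTE fg) (negbTE fT2).
  case: (eqVneq e g) => [->|eg] /=; first by rewrite (negbTE gT1).
  rewrite !orbF; apply/negP => /andP [h1 h2]; exact: decomp_dis D h1 h2.
- apply/setP => e; rewrite !inE.
  case: (eqVneq e f) => [->|ef] /=; first by rewrite !orbT.
  case: (eqVneq e g) => [->|eg] /=; first by rewrite !orbT.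
  by rewrite !orbF; apply: decomp_un D.
Qed.

Definition config ea eb ec := exists T1 T2,
  [/\ decomp T1 T2, ec \in T1, ea \in T2 & eb \in T2].

Hypothesis loopless : forall e, s e != d e.
Hypothesis Hat : atomic s d.

Lemma nv e a b : joins s d e a b -> b != a.
Proof.
by case/joins_cases => -[<- <-]; [rewrite eq_sym|]; exact: loopless.
Qed.

Variables (v x y z : V) (ex ey ez : E).
Hypotheses (Hex : joins s d ex v x) (Hey : joins s d ey v y) (Hez : joins s d ez v z).
Hypothesis Hinc : forall e, (s e == v) || (d e == v) -> [|| e == ex, e == ey | e == ez].
Hypothesis Hxy : ex != ey.

Lemma step T1 T2 : decomp T1 T2 -> ez \in T1 -> ex \in T2 -> ey \in T2 ->
  config ex ez ey \/
  exists T1' T2', [/\ decomp T1' T2', ez \in T1', ex \in T2', ey \in T2' &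
     #|[set u | con (T2' :\ ex :\ ey) x u]| < #|[set u | con (T2 :\ ex :\ ey) x u]| ].
Proof.
move=> D ezT1 exT2 eyT2; have D' := D; case: D' => c1 f1 c2 f2 _ _.
have xv := nv Hex; have yv := nv Hey; have zv := nv Hez.
set F0 := T2 :\ ex :\ ey.
have F0T2 : F0 \subset T2.
  by apply/subsetP => e; rewrite !inE => /and3P [].
have isoF0 e : e \in F0 -> (s e != v) && (d e != v).
  move=> eF0; rewrite -negb_or; apply/negP => /Hinc /or3P [] /eqP ee;
    move: eF0; rewrite ee !inE ?eqxx ?andbF //.
  by move=> /and3P [_ _ /(decomp_dis D ezT1)].
have iso1 e : e \in T1 :\ ez -> (s e != v) && (d e != v).
  move=> eT; rewrite -negb_or; apply/negP => /Hinc /or3P [] /eqP ee;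
    move: eT; rewrite ee !inE ?eqxx ?andbF // => /andP [_ h].
    exact: decomp_dis D h exT2.
  exact: decomp_dis D h eyT2.
have fF0 : forest F0 := forest_sub F0T2 f2.
have exT2y : ex \in T2 :\ ey by rewrite !inE Hxy.
have F0T2y : F0 \subset T2 :\ ey.
  by apply/subsetP => e; rewrite !inE => /and3P [-> _ ->].
have noy : ~~ con F0 x y.
  apply/negP => C; have := f2 ey eyT2; rewrite (con_ends _ Hey).
  apply/negP/negPn; apply: connect_trans (con_edge exT2y Hex) _.
  exact: con_sub F0T2y C.
case: (boolP (con F0 x z)) => xz; last first.
  left; exists (T1 :\ ez :|: [set ey]), (T2 :\ ey :|: [set ez]); split.
  - apply: swap_decomp => //.
      rewrite (con_ends _ Hey); apply/negP => C.
      by have := con_isolated iso1 C; apply/eqP.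
    rewrite (con_ends _ Hez); apply/negP => C.
    have GF0 : T2 :\ ey :\ ex \subset F0.
      by apply/subsetP => e; rewrite !inE => /and3P [-> -> ->].
    have isoG e : e \in T2 :\ ey :\ ex -> (s e != v) && (d e != v).
      by move=> /(subsetP GF0); apply: isoF0.
    case: (con_split ex C) => [k|[k1 k2]|[k1 k2]].
    + by have := con_isolated isoG k; apply/eqP.
    + have sv := con_isolated isoG k1.
      case/joins_cases: Hex => -[h1 h2]; last by rewrite -h1 sv eqxx in xv.
      by move: xz; rewrite (con_sub GF0) // -h2.
    + have dv := con_isolated isoG k1.
      case/joins_cases: Hex => -[h1 h2]; first by rewrite -h2 dv eqxx in xv.
      by move: xz; rewrite (con_sub GF0) // -h1.
  - by rewrite !inE eqxx orbT.
  - by rewrite !inE exT2 (negbTE Hxy).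
  - by rewrite !inE eqxx orbT.
right.
set X := [set u | con F0 x u].
set S := v |: X.
set F' := [set e | (s e \in S) && (d e \in S)].
have vS : v \in S by rewrite !inE eqxx.
have xS : x \in S by rewrite !inE connect0 orbT.
have zS : z \in S by rewrite !inE xz orbT.
have exF' : ex \in F' by rewrite inE; case/joins_cases: Hex => -[-> ->]; rewrite vS xS.
have c2S u : u \in S -> con (T2 :&: F') x u.
  rewrite !inE => /orP [/eqP ->|xu].
    by rewrite conC; apply: (con_edge (e := ex)) Hex; rewrite inE exT2 exF'.
  apply: con_sub (con_restrict xu); apply/subsetP => e; rewrite !inE.
  by case/andP => /and3P [_ _ ->] /andP [-> ->]; rewrite !orbT.
have bX t : t \notin S -> ~~ con F0 x t.
  by move=> tS; apply: contra tS => h; rewrite !inE h orbT.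
case: (boolP [forall (u | u \in S), con (T1 :&: F') x u]) => H.
  exfalso; case: Hat => _ At.
  have c1S u : u \in S -> con (T1 :&: F') x u by move/forall_inP: H; apply.
  have bis : bispanning s d S F'.
    exists (T1 :&: F'), (T2 :&: F'); split.
    - split; first exact: subsetIr.
        by move=> a b aS bS; apply: connect_trans (c1S b bS); rewrite conC c1S.
      by apply: forest_nocyc; apply: forest_sub f1; exact: subsetIl.
    - split; first exact: subsetIr.
        by move=> a b aS bS; apply: connect_trans (c2S b bS); rewrite conC c2S.
      by apply: forest_nocyc; apply: forest_sub f2; exact: subsetIl.
    - rewrite -setI_eq0; apply/eqP/setP => e; rewrite !inE.
      by apply/negP => /andP [/andP [h1 _] /andP [h2 _]]; exact: decomp_dis D h1 h2.
    - by rewrite -setIUl; case: D => _ _ _ _ _ ->; rewrite setTI.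
  have sub : is_subgraph s d [set: V] [set: E] S F'.
    split; [by apply/set0Pn; exists v | exact: subsetT | exact: subsetT |].
    by move=> e; rewrite inE.
  case: (At S F' sub bis) => [[S1 _]|[u Su]].
    have : y \in S by rewrite S1 inE.
    by rewrite !inE (negbTE yv) /= => C; rewrite C in noy.
  by move: vS xS; rewrite Su !inE => /eqP vu /eqP xu; rewrite xu vu eqxx in xv.
move/forall_inPn: H => [w wS nw].
pose P := fun u => con (T1 :&: F') w u.
have Cw : con T1 w x := c1 w x (in_setT _) (in_setT _).
have Px : ~~ P x by rewrite /P conC.
have [f fT1 /andP [cr nf]] := crossing (P := P) f1 Cw (connect0 _ _) Px.
have [a [b [Jf Pa Pb]]] : exists a b, [/\ joins s d f a b, P a & ~~ P b].
  case: (boolP (P (s f))) => h.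
    exists (s f), (d f); split => //; first exact: joins_ends.
    by move: cr; rewrite h; case: (P (d f)).
  exists (d f), (s f); split => //; first by rewrite joinsC joins_ends.
  by move: cr; rewrite (negbTE h); case: (P (d f)).
have inside e : e \in T1 :&: F' -> (s e \in S) && (d e \in S).
  by rewrite !inE => /andP [_].
have aS : a \in S := con_inside inside Pa wS.
have bS : b \notin S.
  apply/negP => bS.
  have fF'1 : f \in T1 :&: F'.
    by rewrite in_setI fT1 /= inE; case/joins_cases: (Jf) => -[-> ->]; rewrite aS bS.
  by move: Pb; rewrite /P (connect_trans Pa (con_edge fF'1 Jf)).
have bv : b != v by apply: contra bS => /eqP ->.
have fez : f != ez.
  apply/eqP => fe; rewrite fe in Jf.
  have Jf' : joins s d ez b a by rewrite joinsC in Jf.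
  case/orP: (joins_in Jf' Hez) => /eqP bb.
    by rewrite bb eqxx in bv.
  by rewrite bb zS in bS.
have av : a != v.
  apply/eqP => av; rewrite av in Jf.
  have : (s f == v) || (d f == v).
    by case/joins_cases: (Jf) => -[-> ->]; rewrite eqxx ?orbT.
  move/Hinc => /or3P [] /eqP fe.
  - by rewrite fe in fT1; exact: decomp_dis D fT1 exT2.
  - by rewrite fe in fT1; exact: decomp_dis D fT1 eyT2.
  - by rewrite fe eqxx in fez.
have aX : con F0 x a by move: aS; rewrite !inE (negbTE av).
have fF' : f \notin F'.
  by rewrite inE; case/joins_cases: (Jf) => -[-> ->]; rewrite (negbTE bS) ?andbF.
have T1F'sub : T1 :&: F' \subset T1 :\ f.
  apply/subsetP => e; rewrite in_setI => /andP [eT1 eF']; rewrite !inE eT1 andbT.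
  by apply/eqP => ef; move: fF'; rewrite -ef eF'.
have nax : ~~ con (T1 :\ f) a x.
  apply/negP => C; have C2 : con (T1 :\ f) w x.
    exact: connect_trans (con_sub T1F'sub Pa) C.
  by rewrite C2 in nf.
pose Q := fun u => con (T1 :\ f) a u.
have aX' : con F0 a x by rewrite conC.
have [g gF0 /andP [cr2 ng]] := crossing (P := Q) fF0 aX' (connect0 _ _) nax.
have n1 : ~~ con (T1 :\ f) (s g) (d g).
  apply/negP => C; have eqQ : Q (s g) = Q (d g).
    apply/idP/idP => h; first exact: connect_trans h C.
    by apply: connect_trans h _; rewrite conC.
  by rewrite eqQ eqxx in cr2.
have gT2 : g \in T2 by move: gF0; rewrite !inE => /and3P [].
have gex : g != ex by move: gF0; rewrite !inE => /and3P [].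
have gey : g != ey by move: gF0; rewrite !inE => /and3P [].
set H := F0 :\ g.
have HF0 : H \subset F0 by apply: subsetDl.
have noHv : ~~ con H a v.
  apply/negP => C; rewrite conC in C.
  have := con_isolated (fun e eH => isoF0 e (subsetP HF0 e eH)) C.
  by move/eqP; rewrite (negbTE av).
have noHy : ~~ con H a y.
  apply/negP => C; move: noy.
  by rewrite (connect_trans aX (con_sub HF0 C)).
have n2 : ~~ con (T2 :\ g) (s f) (d f).
  rewrite (con_ends _ Jf); apply/negP => C.
  have step1 t : con (T2 :\ g :\ ey) a t -> con H a t.
    move=> C1; case: (con_split ex C1) => [k|[k1 _]|[k1 _]].
    - apply: con_sub k; apply/subsetP => e; rewrite !inE.
      by case: (e == g); case: (e == ey); case: (e == ex); case: (e \in T2).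
    - have [h1 _] := joins_P (P := fun t => ~~ con H a t) Hex noHv ng.
      move: h1; rewrite (con_sub _ k1) //; apply/subsetP => e; rewrite !inE.
      by case: (e == g); case: (e == ey); case: (e == ex); case: (e \in T2).
    - have [_ h1] := joins_P (P := fun t => ~~ con H a t) Hex noHv ng.
      move: h1; rewrite (con_sub _ k1) //; apply/subsetP => e; rewrite !inE.
      by case: (e == g); case: (e == ey); case: (e == ex); case: (e \in T2).
  case: (con_split ey C) => [k|[k1 _]|[k1 _]].
  - have := con_sub HF0 (step1 _ k) => Cab.
    by move: (bX b bS); rewrite (connect_trans aX Cab).
  - have [h1 _] := joins_P (P := fun t => ~~ con H a t) Hey noHv noHy.
    by move: h1; rewrite step1.
  - have [_ h1] := joins_P (P := fun t => ~~ con H a t) Hey noHv noHy.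
    by move: h1; rewrite step1.
exists (T1 :\ f :|: [set g]), (T2 :\ g :|: [set f]); split.
- exact: swap_decomp.
- by rewrite !inE eq_sym fez ezT1.
- by rewrite !inE eq_sym gex exT2.
- by rewrite !inE eq_sym gey eyT2.
have Xsub u : con ((T2 :\ g :|: [set f]) :\ ex :\ ey) x u -> con H x u.
  move=> C; have sub2 : (T2 :\ g :|: [set f]) :\ ex :\ ey :\ f \subset H.
    apply/subsetP => e; rewrite !inE.
    by case: (e == f); case: (e == g); case: (e == ey); case: (e == ex); case: (e \in T2).
  case: (con_split f C) => [k|[k1 _]|[k1 _]]; first exact: con_sub sub2 k.
  - have k1' := con_sub sub2 k1; exfalso.
    case/joins_cases: (Jf) => -[h1 h2]; rewrite h1 in k1'.
      by move: ng; rewrite conC k1'.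
    by move: (bX b bS); rewrite (con_sub HF0 k1').
  - have k1' := con_sub sub2 k1; exfalso.
    case/joins_cases: (Jf) => -[h1 h2]; rewrite h2 in k1'.
      by move: (bX b bS); rewrite (con_sub HF0 k1').
    by move: ng; rewrite conC k1'.
apply: proper_card; apply/properP; split.
  apply/subsetP => u; rewrite !inE => /Xsub; exact: con_sub HF0.
exists a; first by rewrite inE.
rewrite inE; apply/negP => /Xsub C.
by move: ng; rewrite conC C.
Qed.

End Pair.

Section PairInd.
Variables (V E : finType) (s d : E -> V).
Local Notation con F := (connect (adj s d F)).
Hypothesis loopless : forall e, s e != d e.
Hypothesis Hat : atomic s d.
Variables (v x y z : V) (ex ey ez : E).
Hypotheses (Hex : joins s d ex v x) (Hey : joins s d ey v y) (Hez : joins s d ez v z).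
Hypothesis Hinc : forall e, (s e == v) || (d e == v) -> [|| e == ex, e == ey | e == ez].
Hypothesis Hxy : ex != ey.

Lemma pair_lem : config s d ex ey ez -> config s d ex ez ey.
Proof.
case=> T1 [T2 [D h1 h2 h3]].
move: {2}#|[set u | con (T2 :\ ex :\ ey) x u]| (leqnn #|[set u | con (T2 :\ ex :\ ey) x u]|) => n.
elim: n T1 T2 D h1 h2 h3 => [|n IH] T1 T2 D h1 h2 h3 Hn;
  case: (step loopless Hat Hex Hey Hez Hinc Hxy D h1 h2 h3) => // -[T1' [T2' [D' h1' h2' h3' lt]]].
- by move: (leq_trans lt Hn).
- by apply: IH D' h1' h2' h3' _; rewrite -ltnS (leq_trans lt Hn).
Qed.

End PairInd.


Section Red.
Variables (V E : finType) (s d : E -> V).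
Hypothesis loopless : forall e, s e != d e.
Variables (v a b c : V) (ea eb ec : E).
Hypotheses (Hea : joins s d ea v a) (Heb : joins s d eb v b) (Hec : joins s d ec v c).
Hypothesis Hinc : forall e, (s e == v) || (d e == v) -> [|| e == ea, e == eb | e == ec].
Hypothesis Hab : ea != eb.
Local Notation rs := (red_ends s a).
Local Notation rd := (red_ends d b).
Local Notation con F := (connect (adj s d F)).
Local Notation rcon F := (connect (adj rs rd F)).

Lemma reduce T1 T2 : decomp s d T1 T2 -> ec \in T1 -> ea \in T2 -> eb \in T2 ->
  bispanning rs rd ([set: V] :\ v)
    [set o : option E | if o is Some e then e \notin [set ea; eb; ec] else true].
Proof.
move=> D ecT1 eaT2 ebT2; have D' := D; case: D' => c1 f1 c2 f2 _ _.
have av := nv loopless Hea; have bv := nv loopless Heb; have cv := nv loopless Hec.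
set S1 := [set o : option E | if o is Some e then e \in T1 :\ ec else false].
set S2 := [set o : option E | if o is Some e then e \in T2 :\ ea :\ eb else true].
have nea1 : ea \notin T1 by apply/negP => h; exact: decomp_dis D h eaT2.
have neb1 : eb \notin T1 by apply/negP => h; exact: decomp_dis D h ebT2.
have nec2 : ec \notin T2 by apply/negP => h; exact: decomp_dis D ecT1 h.
have iso1 e : e \in T1 :\ ec -> (s e != v) && (d e != v).
  move=> eT; rewrite -negb_or; apply/negP => /Hinc /or3P [] /eqP ee;
    move: eT; rewrite ee !inE ?eqxx ?(negbTE nea1) ?(negbTE neb1) ?andbF //.
have iso2 e : e \in T2 :\ ea :\ eb -> (s e != v) && (d e != v).
  move=> eT; rewrite -negb_or; apply/negP => /Hinc /or3P [] /eqP ee;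
    move: eT; rewrite ee !inE ?eqxx ?(negbTE nec2) ?andbF //.
have down (F : {set E}) (G : {set option E}) :
    (forall e, Some e \in G -> e \in F) -> None \notin G ->
    forall p q, rcon G p q -> con F p q.
  move=> h hN; apply: connect_sub => p q /existsP [[e|] /andP [eG J]];
    last by rewrite eG in hN.
  exact: con_edge (h e eG) J.
have up (F : {set E}) (G : {set option E}) :
    (forall e, e \in F -> Some e \in G) -> forall p q, con F p q -> rcon G p q.
  move=> h; apply: connect_sub => p q /existsP [e /andP [eF J]].
  exact: (con_edge (e := Some e)) (h e eF) J.
exists S1, S2; split.
- split.
  + apply/subsetP => -[e|]; rewrite !inE //= => /andP [nec eT1].
    rewrite (negbTE nec) orbF; apply/negP => /orP [] /eqP ee.
      by rewrite -ee eT1 in nea1.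
    by rewrite -ee eT1 in neb1.
  + move=> p q; rewrite !inE => /andP [pv _] /andP [qv _].
    apply: (up (T1 :\ ec)); first by move=> e eT; rewrite inE.
    case: (con_split ec (c1 p q (in_setT _) (in_setT _))) => [k|[k1 k2]|[k1 k2]] //.
    * case/joins_cases: (Hec) => -[h1 h2]; rewrite ?h1 ?h2 in k1 k2.
        by rewrite conC in k1; move: (con_isolated iso1 k1); move/eqP; rewrite (negbTE pv).
      by move: (con_isolated iso1 k2); move/eqP; rewrite (negbTE qv).
    * case/joins_cases: (Hec) => -[h1 h2]; rewrite ?h1 ?h2 in k1 k2.
        by move: (con_isolated iso1 k2); move/eqP; rewrite (negbTE qv).
      by rewrite conC in k1; move: (con_isolated iso1 k1); move/eqP; rewrite (negbTE pv).
  + apply: forest_nocyc => -[e|]; rewrite inE // => eS1; apply/negP => C.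
    have eT1 : e \in T1 by move: eS1; rewrite !inE => /andP [].
    have := f1 e eT1; rewrite (down (T1 :\ e) _ _ _ _ _ C) //.
      by move=> e'; rewrite !inE /= => /and3P [-> _ ->].
    by rewrite !inE.
- split.
  + apply/subsetP => -[e|]; rewrite !inE //= => /and3P [neb nea eT2].
    rewrite (negbTE neb) (negbTE nea) /=; apply/negP => /eqP ee.
    by rewrite -ee eT2 in nec2.
  + move=> p q; rewrite !inE => /andP [pv _] /andP [qv _].
    pose phi u := if u == v then a else u.
    have := con_map (phi := phi) (r := adj s d T2) (r' := adj rs rd S2) _
      (c2 p q (in_setT _) (in_setT _)).
    rewrite /phi (negbTE pv) (negbTE qv); apply.
    move=> p' q' /existsP [e /andP [eT2 J]].
    have phiv : phi v = a by rewrite /phi eqxx.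
    have phia : phi a = a by rewrite /phi (negbTE av).
    have phib : phi b = b by rewrite /phi (negbTE bv).
    have NS2 : None \in S2 by rewrite inE.
    have ab : rcon S2 a b by apply: (con_edge (e := None)) NS2 _; rewrite /joins !eqxx.
    case: (eqVneq e ea) => [eea|nea].
      rewrite eea in J.
      have Jc : joins s d ea q' p' by rewrite joinsC.
      have P1 := joins_in J Hea; have P2 := joins_in Jc Hea.
      by case/orP: P1 => /eqP ->; case/orP: P2 => /eqP ->;
        rewrite ?eqxx ?(negbTE av); exact: connect0.
    case: (eqVneq e eb) => [eeb|neb].
      rewrite eeb in J.
      by case/joins_cases: J => -[<- <-]; case/joins_cases: Heb => -[-> ->];
        rewrite ?eqxx ?(negbTE bv) // conC.
    have eS : e \in T2 :\ ea :\ eb by rewrite !inE neb nea eT2.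
    have /andP [sv dv] := iso2 e eS.
    have [pv' qv'] : p' != v /\ q' != v.
      by case/joins_cases: (J) => -[<- <-].
    rewrite /phi (negbTE pv') (negbTE qv').
    by apply: (con_edge (e := Some e)) _ J; rewrite inE.
  + apply: forest_nocyc => -[e|] eS2; apply/negP => C.
      have [neb nea eT2] : [/\ e != eb, e != ea & e \in T2].
        by move: eS2; rewrite !inE => /and3P [].
      have := f2 e eT2; apply/negP/negPn; move: C.
      apply: connect_sub => p q /existsP [[e'|] /andP [eG J]].
        move: eG; rewrite !inE /= => /andP [ne' /and3P [_ _ e'T2]].
        by apply: (con_edge (e := e')) _ J; rewrite !inE ne' e'T2.
      have eaT : ea \in T2 :\ e by rewrite !inE eq_sym nea eaT2.
      have ebT : eb \in T2 :\ e by rewrite !inE eq_sym neb ebT2.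
      have AB : con (T2 :\ e) a b.
        apply: connect_trans (_ : con (T2 :\ e) a v) _.
          by apply: (con_edge eaT); rewrite joinsC.
        exact: con_edge ebT Heb.
      by case/orP: J => /andP [/eqP <- /eqP <-] //; rewrite conC.
    have := f2 eb ebT2; rewrite (con_ends _ Heb); apply/negP/negPn.
    have eaT : ea \in T2 :\ eb by rewrite !inE Hab eaT2.
    apply: connect_trans (con_edge eaT Hea) _.
    apply: con_sub (_ : T2 :\ ea :\ eb \subset T2 :\ eb) _.
      by apply/subsetP => e; rewrite !inE => /and3P [-> _ ->].
    apply: (down (T2 :\ ea :\ eb) (S2 :\ None)) C.
      by move=> e; rewrite !inE.
    by rewrite !inE.
- rewrite -setI_eq0; apply/eqP/setP => -[e|]; rewrite !inE //=.
  apply/negP => /andP [/andP [_ h1] /and3P [_ _ h2]]; exact: decomp_dis D h1 h2.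
- apply/setP => -[e|]; rewrite !inE //=.
  case: (boolP (e \in T1)) => eT1.
    have eT2 : e \notin T2 by apply/negP => h; exact: decomp_dis D eT1 h.
    have -> : (e == ea) = false by apply/eqP => h; rewrite -h eT1 in nea1.
    have -> : (e == eb) = false by apply/eqP => h; rewrite -h eT1 in neb1.
    by rewrite (negbTE eT2) /=; case: (e == ec).
  have eT2 : e \in T2 by have := decomp_un e D; rewrite (negbTE eT1).
  have -> : (e == ec) = false by apply/eqP => h; rewrite h ecT1 in eT1.
  by rewrite eT2 /= ?(negbTE eT1) ?andbF /=; case: (e == ea); case: (e == eb).
Qed.

End Red.


Lemma configC (V E : finType) (s d : E -> V) a b c :
  config s d a b c -> config s d b a c.
Proof. by case=> T1 [T2 [D h1 h2 h3]]; exists T1, T2; split. Qed.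

Theorem mainTheorem12 (V E : finType) (src dst : E -> V)
  (loopless : forall e, src e != dst e)
  (Hatomic : atomic src dst)
  (v x y z : V) (ex ey ez : E)
  (Hex : joins src dst ex v x) (Hey : joins src dst ey v y) (Hez : joins src dst ez v z)
  (Hinc : [set e | (src e == v) || (dst e == v)] = [set ex; ey; ez])
  (Hdeg : #|[set ex; ey; ez]| = 3) :
  [/\ bispanning (red_ends src x) (red_ends dst y) (red_vertices v) (red_edges ex ey ez),
      bispanning (red_ends src x) (red_ends dst z) (red_vertices v) (red_edges ex ey ez) &
      bispanning (red_ends src y) (red_ends dst z) (red_vertices v) (red_edges ex ey ez)].
Proof.
have Hinc0 e : (src e == v) || (dst e == v) -> [|| e == ex, e == ey | e == ez].
  move=> h; have : e \in [set e | (src e == v) || (dst e == v)] by rewrite inE.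
  by rewrite Hinc !inE -orbA.
have card3 (a b c : E) : #|[set a; b; c]| = 3 -> a != b.
  move=> H; apply/eqP => ab; move: H; rewrite ab.
  have -> : [set b; b; c] = [set b; c].
    by apply/setP => e; rewrite !inE; case: (e == b); case: (e == c).
  by rewrite cards2; case: (b != c).
have Hxy : ex != ey by apply: card3 Hdeg.
have eq1 : [set ex; ez; ey] = [set ex; ey; ez].
  by apply/setP => e; rewrite !inE; case: (e == ex); case: (e == ey); case: (e == ez).
have eq2 : [set ey; ez; ex] = [set ex; ey; ez].
  by apply/setP => e; rewrite !inE; case: (e == ex); case: (e == ey); case: (e == ez).
have Hxz : ex != ez by apply: (card3 _ ez ey); rewrite eq1.
have Hyz : ey != ez by apply: (card3 _ ez ex); rewrite eq2.
have Hyx : ey != ex by rewrite eq_sym.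
have Hi_xzy e : (src e == v) || (dst e == v) -> [|| e == ex, e == ez | e == ey].
  by move/Hinc0; case: (e == ex); case: (e == ey); case: (e == ez).
have Hi_yxz e : (src e == v) || (dst e == v) -> [|| e == ey, e == ex | e == ez].
  by move/Hinc0; case: (e == ex); case: (e == ey); case: (e == ez).
have Hi_yzx e : (src e == v) || (dst e == v) -> [|| e == ey, e == ez | e == ex].
  by move/Hinc0; case: (e == ex); case: (e == ey); case: (e == ez).
have P_xyz := pair_lem loopless Hatomic Hex Hey Hez Hinc0 Hxy.
have P_yxz := pair_lem loopless Hatomic Hey Hex Hez Hi_yxz Hyx.
have P_xzy := pair_lem loopless Hatomic Hex Hez Hey Hi_xzy Hxz.
have P_yzx := pair_lem loopless Hatomic Hey Hez Hex Hi_yzx Hyz.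
have start : config src dst ex ey ez.
  have Hat := Hatomic.
  case: Hatomic => [[T1 [T2 [[_ c1 nc1] [_ c2 nc2] dis un]]] _].
  have D : decomp src dst T1 T2.
    by split => //; apply: nocyc_forest.
  have has_v T : gconnected src dst [set: V] T -> [|| ex \in T, ey \in T | ez \in T].
    move=> cT; apply: contraT => H.
    have iso e : e \in T -> (src e != v) && (dst e != v).
      move=> eT; rewrite -negb_or; apply/negP => /Hinc0 /or3P [] /eqP ee;
        by move: H; rewrite -ee eT ?orbT.
    have := con_isolated iso (cT v x (in_setT _) (in_setT _)).
    by move/eqP; rewrite (negbTE (nv loopless Hex)).
  have h1 := has_v _ c1; have h2 := has_v _ c2.
  have un' e : e \notin T1 -> e \in T2.
    by move=> h; have := decomp_un e D; rewrite (negbTE h).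
  have dj e : e \in T1 -> e \notin T2.
    by move=> h; apply/negP => h'; exact: decomp_dis D h h'.
  have DC := decompC D.
  case: (boolP (ex \in T1)) => a1; case: (boolP (ey \in T1)) => b1;
    case: (boolP (ez \in T1)) => c1'.
  - by move: h2; rewrite (negbTE (dj _ a1)) (negbTE (dj _ b1)) (negbTE (dj _ c1')).
  - by exists T2, T1; split => //; exact: un'.
  - by apply: P_xzy; exists T2, T1; split => //; exact: un'.
  - by apply: configC; apply: P_yzx; exists T1, T2; split => //; exact: un'.
  - by apply: configC; apply: P_yzx; exists T2, T1; split => //; exact: un'.
  - by apply: P_xzy; exists T1, T2; split => //; exact: un'.
  - by exists T1, T2; split => //; exact: un'.
  - by move: h1; rewrite (negbTE a1) (negbTE b1) (negbTE c1').
have C1 := start.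
have C2 := P_xyz start.
have C3 := P_yxz (configC start).
rewrite /red_vertices /red_edges; split.
- case: C1 => T1 [T2 [D h1 h2 h3]].
  exact: (reduce loopless Hex Hey Hez Hinc0 Hxy D h1 h2 h3).
- case: C2 => T1 [T2 [D h1 h2 h3]].
  rewrite -eq1; exact: (reduce loopless Hex Hez Hey Hi_xzy Hxz D h1 h2 h3).
- case: C3 => T1 [T2 [D h1 h2 h3]].
  rewrite -eq2; exact: (reduce loopless Hey Hez Hex Hi_yzx Hyz D h1 h2 h3).
Qed.
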